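(* Let $(R,\mathfrak m)$ be a one-dimensional Cohen–Macaulay local ring. Let $I,J$ be regular trace ideals of $R$ with $J\subseteq I$ and $\ell_R(I/J)=2$. Assume that $I:I$ is a local ring and there exists $q\in I\setminus J$ with $IJ=qJ$ and $I^2\ne qI$. Then $$\mathcal T(I:I)=\{q^{-1}Y\mid Y\in\mathcal T(R),\ Y\subseteq J\}\cup\{I:I\}.$$
   Context: $Q(R)$ is the total ring of fractions, $I:I=\{x\in Q(R)\mid xI\subseteq I\}$, $\ell_R$ denotes length. An ideal is regular if it contains a non-zerodivisor. For a ring $A$, the trace ideal of an $A$-module $M$ is $\sum_{f\in\mathrm{Hom}_A(M,A)}\mathrm{Im}f$, and $\mathcal T(A)$ is the set of regular trace ideals of $A$. *)

(* Defs.v *)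
From HB Require Import structures.
From mathcomp Require Import all_boot all_algebra.
From mathcomp Require Import boolp.
Set Implicit Arguments. Unset Strict Implicit. Unset Printing Implicit Defensive.
Import GRing.Theory.
Local Open Scope ring_scope.

Definition nzd (A : comNzRingType) (x : A) : Prop :=
  forall y : A, x * y = 0 -> y = 0.

Definition subP (A : Type) (X Y : A -> Prop) : Prop := forall x, X x -> Y x.
Definition ssubP (A : Type) (X Y : A -> Prop) : Prop :=
  subP X Y /\ exists y, Y y /\ ~ X y.
Definition eqP_ (A : Type) (X Y : A -> Prop) : Prop := forall x, X x <-> Y x.

Definition is_ideal (A : comNzRingType) (X : A -> Prop) : Prop :=
  [/\ X 0, (forall x y, X x -> X y -> X (x + y)) & (forall a x, X x -> X (a * x))].

Definition prime_ideal (A : comNzRingType) (P : A -> Prop) : Prop :=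
  [/\ is_ideal P, ~ P 1 & forall a b, P (a * b) -> P a \/ P b].

Definition maximal_ideal (A : comNzRingType) (P : A -> Prop) : Prop :=
  [/\ is_ideal P, ~ P 1 &
      forall X, is_ideal X -> subP P X -> subP X P \/ X 1].

Definition local_with (A : comNzRingType) (m : A -> Prop) : Prop :=
  maximal_ideal m /\ forall m', maximal_ideal m' -> eqP_ m' m.

Definition local_ring (A : comNzRingType) : Prop := exists m : A -> Prop, local_with m.

Definition noetherian (A : comNzRingType) : Prop :=
  forall K : nat -> A -> Prop, (forall n, is_ideal (K n)) ->
    (forall n, subP (K n) (K n.+1)) ->
    exists N, forall n, (N <= n)%N -> subP (K n) (K N).

Definition prime_chain (A : comNzRingType) (n : nat) : Prop :=
  exists P : nat -> A -> Prop,
    (forall i, (i <= n)%N -> prime_ideal (P i)) /\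
    (forall i, (i < n)%N -> ssubP (P i) (P i.+1)).

Definition krull_dim (A : comNzRingType) (n : nat) : Prop :=
  prime_chain A n /\ ~ prime_chain A n.+1.

Definition gen_ideal (A : comNzRingType) (s : seq A) (x : A) : Prop :=
  exists c : nat -> A, x = \sum_(i < size s) c i * s`_i.

Definition regular_seq (A : comNzRingType) (s : seq A) : Prop :=
  (forall i, (i < size s)%N -> forall y,
      gen_ideal (take i s) (s`_i * y) -> gen_ideal (take i s) y) /\
  ~ gen_ideal s 1.

Definition cohen_macaulay (A : comNzRingType) (m : A -> Prop) : Prop :=
  exists n, krull_dim A n /\
    exists s : seq A, [/\ size s = n, (forall x, x \in s -> m x) & regular_seq s].

(* length of the R-module I/J (J <= I), via chains of intermediate ideals *)
Definition ideal_chain (A : comNzRingType) (J I : A -> Prop) (n : nat) : Prop :=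
  exists K : nat -> A -> Prop,
    [/\ forall i, (i <= n)%N -> is_ideal (K i), eqP_ (K 0%N) J, eqP_ (K n) I &
        forall i, (i < n)%N -> ssubP (K i) (K i.+1)].

Definition quot_length (A : comNzRingType) (J I : A -> Prop) (n : nat) : Prop :=
  ideal_chain J I n /\ ~ ideal_chain J I n.+1.

Definition prod_ideal (A : comNzRingType) (X Y : A -> Prop) (z : A) : Prop :=
  exists n (a b : 'I_n -> A), [/\ forall i, X (a i), forall i, Y (b i) &
                                   z = \sum_(i < n) a i * b i].

Definition trace_of (A : comNzRingType) (M : lmodType A) (a : A) : Prop :=
  exists n (f : 'I_n -> {linear M -> A^o}) (v : 'I_n -> M),
    a = \sum_(i < n) f i (v i).

Definition reg_trace (A : comNzRingType) (X : A -> Prop) : Prop :=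
  (exists M : lmodType A, eqP_ X (trace_of M)) /\ exists x, X x /\ nzd x.

Definition total_ring_of_fractions (R : comNzRingType) (Q : comUnitRingType)
  (iota : {rmorphism R -> Q}) : Prop :=
  [/\ injective iota,
      forall s, nzd s -> iota s \is a GRing.unit &
      forall z : Q, exists a s, nzd s /\ z = iota a / iota s].

Record ideal (R : comNzRingType) := Ideal {
  ideal_mem :> R -> Prop;
  ideal_is_ideal : is_ideal ideal_mem }.

Section Colon.
Variables (R : comNzRingType) (Q : comUnitRingType)
          (iota : {rmorphism R -> Q}) (I : ideal R).

Definition colonP (x : Q) : Prop :=
  forall i, I i -> exists j, I j /\ x * iota i = iota j.

Definition colonb : pred Q := fun x => `[< colonP x >].

Lemma colon_closed : subring_closed colonb.
Proof.
case: (ideal_is_ideal I) => I0 ID IM.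
split.
- apply/asboolP => i Ii; exists i; split => //; by rewrite mul1r.
- move=> x y /asboolP Hx /asboolP Hy; apply/asboolP => i Ii.
  have [j1 [Ij1 E1]] := Hx i Ii; have [j2 [Ij2 E2]] := Hy i Ii.
  exists (j1 - j2); split.
  + apply: ID => //; rewrite -mulN1r; exact: IM.
  + by rewrite mulrBl E1 E2 rmorphB.
- move=> x y /asboolP Hx /asboolP Hy; apply/asboolP => i Ii.
  have [j2 [Ij2 E2]] := Hy i Ii; have [j1 [Ij1 E1]] := Hx j2 Ij2.
  exists j1; split => //; by rewrite -mulrA E2 E1.
Qed.

Record colon_ring := ColonRing { colon_val :> Q; colon_valP : colon_val \in colonb }.
HB.instance Definition _ := [isSub for colon_val].
HB.instance Definition _ := [Choice of colon_ring by <:].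
HB.instance Definition _ :=
  GRing.SubChoice_isSubComNzRing.Build Q colonb colon_ring colon_closed.
End Colon.

(* Main.v *)
Require Import Defs.
From HB Require Import structures.
From mathcomp Require Import all_boot all_algebra.
From mathcomp Require Import boolp.
Import GRing.Theory.
Local Open Scope ring_scope.

Module Helpers.
Set Implicit Arguments. Unset Strict Implicit. Unset Printing Implicit Defensive.

Section TraceStable.
Variables (A : comNzRingType) (Q : comUnitRingType) (e : {rmorphism A -> Q}).
Hypothesis einj : injective e.
Variables (M : lmodType A) (f : {linear M -> A^o}) (al : Q).
Hypothesis Hal : forall v, exists a, al * e (f v) = e a.
Lemma Hal' v : exists a, e a == al * e (f v).
Proof. by have [a Ha] := Hal v; exists a; rewrite Ha. Qed.
Definition gmap v : A^o := xchoose (Hal' v).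
Lemma gmapE v : e (gmap v) = al * e (f v).
Proof. exact/eqP/(xchooseP (Hal' v)). Qed.
Lemma gmap_lin : linear gmap.
Proof.
move=> a u v; apply: einj.
have sE (x : A^o) : a *: x = a * (x : A) by [].
rewrite rmorphD !gmapE linearP /= !sE !rmorphD !rmorphM /= !gmapE.
by rewrite mulrDr mulrCA.
Qed.
HB.instance Definition _ := GRing.isLinear.Build A M A^o *:%R gmap gmap_lin.
Definition gmapL : {linear M -> A^o} := gmap.
End TraceStable.

Lemma trace_mem (A : comNzRingType) (M : lmodType A) (f : {linear M -> A^o}) v :
  trace_of M (f v).
Proof. by exists 1%N, (fun _ => f), (fun _ => v); rewrite big_ord1. Qed.

Lemma trace_stable (A : comNzRingType) (Q : comUnitRingType) (e : {rmorphism A -> Q})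
  (einj : injective e) (M : lmodType A) (Y : A -> Prop) (HY : eqP_ Y (trace_of M))
  (al : Q) (H : forall y, Y y -> exists a, al * e y = e a) :
  forall y, Y y -> exists y', Y y' /\ al * e y = e y'.
Proof.
move=> y /HY [n [f [v ->]]].
have Hi : forall i w, exists a, al * e (f i w) = e a.
  by move=> i w; apply: H; apply/HY; apply: trace_mem.
exists (\sum_(i < n) gmapL einj (Hi i) (v i)); split.
  by apply/HY; exists n, (fun i => gmapL einj (Hi i)), v.
rewrite !rmorph_sum mulr_sumr; apply: eq_bigr => i _.
by rewrite /= gmapE.
Qed.

Lemma ord0_False (i : 'I_0) : False. Proof. by case: i. Qed.

Lemma trace_is_ideal (A : comNzRingType) (M : lmodType A) : is_ideal (trace_of M).
Proof.
split.
- exists 0%N, (fun i => False_rect _ (ord0_False i)),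
        (fun i => False_rect _ (ord0_False i)).
  by rewrite big_ord0.
- move=> x y [n1 [f1 [v1 ->]]] [n2 [f2 [v2 ->]]].
  exists (n1 + n2)%N, (fun i => match split i with inl a => f1 a | inr b => f2 b end),
    (fun i => match split i with inl a => v1 a | inr b => v2 b end).
  rewrite big_split_ord /=; congr (_ + _); apply: eq_bigr => i _.
    by rewrite (unsplitK (inl i)).
  by rewrite (unsplitK (inr i)).
- move=> a x [n [f [v ->]]].
  exists n, f, (fun i => a *: v i).
  rewrite mulr_sumr; apply: eq_bigr => i _; by rewrite linearZ.
Qed.

Section IdealMod.
Variables (A : comNzRingType) (Y : A -> Prop) (HY : is_ideal Y).
Definition Yb : pred A^o := fun x => `[< Y x >].
Lemma Yb_closed : subsemimod_closed Yb.
Proof.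
case: HY => Y0 YD YM; split; first split.
- exact/asboolP.
- by move=> x y /asboolP Hx /asboolP Hy; apply/asboolP; apply: YD.
- by move=> a x /asboolP Hx; apply/asboolP; apply: YM.
Qed.
Record idrec := IdMod { idval :> A^o; idvalP : idval \in Yb }.
Definition idmod (H : is_ideal Y) := idrec.
HB.instance Definition _ := [isSub of idmod HY for idval].
HB.instance Definition _ := [Choice of idmod HY by <:].
HB.instance Definition _ := GRing.SubChoice_isSubLmodule.Build A A^o Yb (idmod HY) Yb_closed.
Definition idv (x : idmod HY) : A^o := idval x.
Lemma idval_lin : linear idv.
Proof. by move=> a u v. Qed.
HB.instance Definition _ := GRing.isLinear.Build A (idmod HY) A^o *:%R idv idval_lin.
Definition idvalL : {linear idmod HY -> A^o} := idv.
End IdealMod.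

Lemma ideal_trace (A : comNzRingType) (Q : comUnitRingType) (e : {rmorphism A -> Q})
  (einj : injective e) (Y : A -> Prop) (HY : is_ideal Y) (y0 : A) (Yy0 : Y y0)
  (u0 : e y0 \is a GRing.unit)
  (Hst : forall al : Q, (forall y, Y y -> exists a, al * e y = e a) ->
           forall y, Y y -> exists y', Y y' /\ al * e y = e y') :
  exists M : lmodType A, eqP_ Y (trace_of M).
Proof.
exists (idmod HY) => x; split.
  move=> Yx; have xP : (x : A^o) \in Yb Y by apply/asboolP.
  by exists 1%N, (fun _ => idvalL HY), (fun _ => IdMod xP); rewrite big_ord1.
have [Y0 YD YM] := HY.
move=> [n [f [v ->]]].
elim/big_ind: _ => //.
move=> i _.
have y0P : (y0 : A^o) \in Yb Y by apply/asboolP.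
pose y0m : idmod HY := IdMod y0P.
pose al := e (f i y0m) / e y0.
have key : forall w : idmod HY, e (f i w) = al * e (idval w).
  move=> w.
  have E : y0 *: w = (idval w : A) *: y0m by apply: val_inj; rewrite !linearZ /=; apply: mulrC.
  have := congr1 (fun z => e (f i z)) E; rewrite !linearZ /= !rmorphM /= => E2.
  rewrite /al mulrAC; apply: (mulrI u0); rewrite mulrCA divrr // mulr1 E2 mulrC.
  by [].

have H1 : forall y, Y y -> exists a, al * e y = e a.
  move=> y Yy; have yP : (y : A^o) \in Yb Y by apply/asboolP.
  by exists (f i (IdMod yP : idmod HY)); rewrite key.
have Yv : Y (idval (v i)) by apply/asboolP; exact: idvalP.
have [y' [Yy' Ey']] := Hst al H1 _ Yv.
have -> : f i (v i) = y' by apply: einj; rewrite key.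
exact: Yy'.
Qed.

Definition acc_ideals (A : comNzRingType) : Prop :=
  forall K : nat -> A -> Prop, (forall n, is_ideal (K n)) ->
    (forall n, subP (K n) (K n.+1)) ->
    exists N, forall n, (N <= n)%N -> subP (K n) (K N).

Section MaxEx.
Variables (A : comNzRingType) (acc : acc_ideals A) (K0 : A -> Prop).
Definition good (K : A -> Prop) := [/\ is_ideal K, ~ K 1 & subP K0 K].
Hypothesis Hno : ~ exists M, maximal_ideal M /\ subP K0 M.
Lemma step (K : A -> Prop) : good K -> exists X, [/\ good X, subP K X & ~ subP X K].
Proof.
move=> [HK n1 s]; apply: contrapT => H.
apply: Hno; exists K; split => //; split => // X HX sKX.
case: (pselect (X 1)) => [|n1X]; [by right|left].
apply: contrapT => nsub; apply: H; exists X; split => //; split => //.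
by move=> x /s /sKX.
Qed.
Definition T := {K : A -> Prop | good K}.
Definition nxt (t : T) : T :=
  exist _ (sval (cid (step (proj2_sig t)))) (let: And3 g _ _ := proj2_sig (cid (step (proj2_sig t))) in g).
Lemma nxtP (t : T) : subP (sval t) (sval (nxt t)) /\ ~ subP (sval (nxt t)) (sval t).
Proof. by rewrite /nxt /=; case: (cid _) => X [? ? ?]. Qed.
End MaxEx.

Lemma max_exists (A : comNzRingType) (acc : acc_ideals A) (K0 : A -> Prop) :
  is_ideal K0 -> ~ K0 1 -> exists M, maximal_ideal M /\ subP K0 M.
Proof.
move=> HK n1; apply: contrapT => Hno.
have g0 : good K0 K0 by split.
pose t0 : T K0 := exist _ K0 g0.
pose ch n := sval (iter n (nxt Hno) t0).
have chI : forall n, is_ideal (ch n).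
  by move=> n; rewrite /ch; case: (iter n _ _) => X [].
have chS : forall n, subP (ch n) (ch n.+1).
  by move=> n; rewrite /ch /=; have [H1 _] := nxtP Hno (iter n (nxt Hno) t0).
have [N HN] := acc ch chI chS.
have := HN N.+1 (leqnSn N); have [_ H2] := nxtP Hno (iter N (nxt Hno) t0).
by [].
Qed.

Lemma is_ideal_eq (A : comNzRingType) (X Y : A -> Prop) :
  eqP_ X Y -> is_ideal Y -> is_ideal X.
Proof.
move=> E [Y0 YD YM]; split.
- exact/E.
- by move=> x y /E Hx /E Hy; apply/E; apply: YD.
- by move=> a x /E Hx; apply/E; apply: YM.
Qed.

Lemma reg_trace_ideal (A : comNzRingType) (X : A -> Prop) : reg_trace X -> is_ideal X.
Proof. by move=> [[M HM] _]; apply: is_ideal_eq HM _; apply: trace_is_ideal. Qed.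

Section Main.
Variables (R : comNzRingType) (Q : comUnitRingType)
  (iota : {rmorphism R -> Q}) (I J : ideal R) (q : R).
Hypothesis iinj : injective iota.
Hypothesis iunit : forall s, nzd s -> iota s \is a GRing.unit.
Hypothesis ifrac : forall z : Q, exists a s, nzd s /\ z = iota a / iota s.
Hypothesis trI : reg_trace I.
Hypothesis trJ : reg_trace J.
Hypothesis JI : subP J I.
Hypothesis Iq : I q.
Hypothesis nJq : ~ J q.
Hypothesis HIJ : eqP_ (prod_ideal I J) (fun z => exists j, J j /\ z = q * j).

Local Notation S := (colon_ring iota I).

Lemma Iideal : is_ideal I. Proof. exact: ideal_is_ideal. Qed.
Lemma Jideal : is_ideal J. Proof. exact: ideal_is_ideal. Qed.

Lemma F_IJ i j : I i -> J j -> exists j', J j' /\ i * j = q * j'.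
Proof.
move=> Ii Jj; apply/HIJ; exists 1%N, (fun _ => i), (fun _ => j).
by rewrite big_ord1.
Qed.

Lemma nzd_q : nzd q.
Proof.
have [[MI HMI] [i0 [Ii0 nzi0]]] := trI.
have [[MJ HMJ] [j0 [Jj0 nzj0]]] := trJ.
have [j' [_ E]] := F_IJ Ii0 Jj0.
move=> y qy; apply: nzj0; apply: nzi0.
by rewrite mulrA E mulrC mulrA [y * q]mulrC qy mul0r.
Qed.

Lemma uq : iota q \is a GRing.unit. Proof. exact: iunit nzd_q. Qed.

Lemma Fiota a : iota a \in colonb iota I.
Proof.
apply/asboolP => i Ii; exists (a * i); split; last by rewrite rmorphM.
by case: Iideal => _ _; apply.
Qed.

Lemma F2 j : J j -> (iota q)^-1 * iota j \in colonb iota I.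
Proof.
move=> Jj; apply/asboolP => i Ii.
have [j' [Jj' E]] := F_IJ Ii Jj.
exists j'; split; first exact: JI.
by rewrite -mulrA -rmorphM [j * i]mulrC E rmorphM mulrA mulVr ?uq // mul1r.
Qed.

Lemma F_RI (al : Q) : (forall i, I i -> exists a, al * iota i = iota a) ->
  al \in colonb iota I.
Proof.
move=> H; have [[MI HMI] _] := trI.
apply/asboolP => i Ii; have [y' [Iy' E]] := trace_stable iinj HMI H Ii.
by exists y'.
Qed.

Definition toS (x : Q) (P : x \in colonb iota I) : S := ColonRing P.
Definition vS : {rmorphism S -> Q} := val.
Lemma vS_inj : injective vS. Proof. exact: val_inj. Qed.
Lemma vS_toS x (P : x \in colonb iota I) : vS (toS P) = x. Proof. by []. Qed.
Lemma vSP (s : S) : colonP iota I (vS s).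
Proof. exact/asboolP/(valP s). Qed.

Lemma F_SJ (s : S) j : J j -> exists j', J j' /\ vS s * iota j = iota j'.
Proof.
move=> Jj; have [[MJ HMJ] _] := trJ.
apply: (trace_stable iinj HMJ) => // y Jy.
have [a [_ E]] := vSP s (JI Jy).
by exists a.
Qed.

Lemma nzd_S_unit (s : S) : nzd s -> vS s \is a GRing.unit.
Proof.
move=> nzs.
have [[MI HMI] [i0 [Ii0 nzi0]]] := trI.
have [a [b [nzb E]]] := ifrac (vS s).
have nza : nzd a.
  move=> y ay.
  set t := toS (Fiota (y * i0)).
  have vt : vS t = iota (y * i0) by [].
  have : t = 0.
    apply: nzs; apply: vS_inj; rewrite rmorphM vt E rmorph0.
    by rewrite mulrAC rmorphM mulrA -rmorphM ay rmorph0 !mul0r.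
  move/(congr1 vS); rewrite vt rmorph0 -(rmorph0 iota) => /iinj.
  by rewrite mulrC => /nzi0.
by rewrite E unitrM iunit // unitrV iunit.
Qed.


Definition nS : S -> Prop := fun s => exists j, J j /\ iota q * vS s = iota j.
Definition pull (c : R) (P : S -> Prop) : R -> Prop :=
  fun r => exists t, P t /\ iota r = iota c * vS t.

Lemma pull_ideal c P : is_ideal P -> is_ideal (pull c P).
Proof.
move=> [P0 PD PM]; split.
- by exists 0; split => //; rewrite !rmorph0 mulr0.
- move=> x y [t1 [P1 E1]] [t2 [P2 E2]]; exists (t1 + t2); split; first exact: PD.
  by rewrite !rmorphD E1 E2 mulrDr.
- move=> a x [t [Pt E]]; exists (toS (Fiota a) * t); split; first exact: PM.
  by rewrite !rmorphM E vS_toS mulrCA.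
Qed.

Lemma nS_ideal : is_ideal nS.
Proof.
have [J0 JD JM] := Jideal; split.
- by exists 0; split => //; rewrite !rmorph0 mulr0.
- move=> x y [j1 [J1 E1]] [j2 [J2 E2]]; exists (j1 + j2); split; first exact: JD.
  by rewrite !rmorphD mulrDr E1 E2.
- move=> a x [j [Jj E]]; have [j' [Jj' E']] := F_SJ a Jj.
  by exists j'; split => //; rewrite rmorphM mulrCA E E'.
Qed.

Lemma nS1 : ~ nS 1.
Proof.
by move=> [j [Jj]]; rewrite rmorph1 mulr1 => /iinj E; apply: nJq; rewrite E.
Qed.

Lemma qS_I r : pull q (fun _ => True) r -> I r.
Proof.
move=> [t [_ E]]; have [j [Ij Ej]] := vSP t Iq.
by rewrite (iinj (_ : iota r = iota j)) // E mulrC.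
Qed.

Hypothesis HII : ~ eqP_ (prod_ideal I I) (fun z => exists i, I i /\ z = q * i).

Lemma not_I_qS : exists i, I i /\ ~ pull q (fun _ => True) i.
Proof.
apply: contrapT => H.
have H' : forall i, I i -> pull q (fun _ => True) i.
  move=> i Ii; apply: contrapT => nP; apply: H; by exists i.
have [I0 ID IM] := Iideal.
apply: HII => z; split.
- move=> [n [a [b [Ha Hb ->]]]].
  elim/big_ind: _ => //.
  + by exists 0; split => //; rewrite mulr0.
  + by move=> x y [i1 [I1 ->]] [i2 [I2 ->]]; exists (i1 + i2); split; [apply: ID|rewrite mulrDr].
  + move=> k _; have [t [_ Et]] := H' _ (Ha k).
    have [j [Ij Ej]] := vSP t (Hb k).
    exists j; split => //; apply: iinj.
    by rewrite !rmorphM Et -mulrA Ej.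
- move=> [i [Ii ->]]; exists 1%N, (fun _ => q), (fun _ => i).
  by rewrite big_ord1.
Qed.

Hypothesis Hno3 : ~ ideal_chain J I 3.

Lemma nS_max : maximal_ideal nS.
Proof.
split; [exact: nS_ideal | exact: nS1 |].
move=> X HX snX; case: (pselect (subP X nS)) => [l|nl]; [by left|right].
apply: contrapT => nX1.
have [k [Xk nk]] : exists k, X k /\ ~ nS k.
  apply: contrapT => H; apply: nl => x Xx; apply: contrapT => nx; apply: H; by exists x.
have [X0 XD XM] := HX.
pose L : S -> Prop := fun t => exists nu s, nS nu /\ t = nu + s * k.
have LI : is_ideal L.
  have [n0 nD nM] := nS_ideal.
  split.
  - by exists 0, 0; split => //; rewrite mul0r addr0.
  - move=> x y [n1 [s1 [N1 ->]]] [n2 [s2 [N2 ->]]].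
    exists (n1 + n2), (s1 + s2); split; first exact: nD.
    by rewrite mulrDl addrACA.
  - move=> a x [n1 [s1 [N1 ->]]]; exists (a * n1), (a * s1); split; first exact: nM.
    by rewrite mulrDr mulrA.
have LX : subP L X.
  by move=> t [nu [s [Nnu ->]]]; apply: XD; [apply: snX | apply: XM].
pose K := fun i : nat => match i with 0 => (J : R -> Prop) | 1 => pull q L
   | 2 => pull q (fun _ => True) | _ => (I : R -> Prop) end.
apply: Hno3; exists K; split.
- case=> [|[|[|i]]] _ /=.
  + exact: Jideal.
  + exact: pull_ideal.
  + by apply: pull_ideal; split.
  + exact: Iideal.
- by move=> x; split.
- by move=> x; split.
- case=> [|[|[|i]]] // _.
  + split.
    * move=> j Jj; exists (toS (F2 Jj)); split.
        exists (toS (F2 Jj)), 0; split; last by rewrite mul0r addr0.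
        by exists j; split => //; rewrite vS_toS mulrA mulrV ?uq // mul1r.
      by rewrite vS_toS mulrA mulrV ?uq // mul1r.
    * have [j [Ij Ej]] := vSP k Iq.
      exists j; split.
        exists k; split; last by rewrite -Ej mulrC.
        by exists 0, 1; split; [case: nS_ideal | rewrite mul1r add0r].
      by move=> Jj; apply: nk; exists j; split => //; rewrite mulrC.
  + split; first by move=> r [t [_ E]]; exists t.
    exists q; split; first by exists 1; split => //; rewrite rmorph1 mulr1.
    move=> [t [Lt E]]; apply: nX1.
    have : t = 1.
      apply: vS_inj; rewrite rmorph1; apply: (mulrI uq); by rewrite -E mulr1.
    by move=> Et; rewrite -Et; apply: LX.
  + split; first exact: qS_I.
    by have [i [Ii ni]] := not_I_qS; exists i.
Qed.

Hypothesis noeth : noetherian R.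

Lemma acc_S : acc_ideals S.
Proof.
have [_ [i0 [Ii0 nzi0]]] := trI.
move=> K HK HKS.
pose K' n := pull i0 (K n).
have [N HN] := noeth (fun n => pull_ideal i0 (HK n) : is_ideal (K' n))
  (fun n r => fun '(ex_intro t (conj Kt E)) => ex_intro _ t (conj (HKS n t Kt) E)).
exists N => n le t Kt.
have [j [Ij Ej]] := vSP t Ii0.
have : K' n j by exists t; split => //; rewrite -Ej mulrC.
move/(HN n le) => [t' [Kt' E']].
have -> : t = t' => //.
apply: vS_inj; apply: (mulrI (iunit nzi0)); by rewrite -E' -Ej mulrC.
Qed.

Lemma in_nS (X' : S -> Prop) : local_ring S -> is_ideal X' -> ~ X' 1 -> subP X' nS.
Proof.
move=> [m' [m'max uniq]] HX n1.
have [M [Mmax sXM]] := max_exists acc_S HX n1.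
have E1 := uniq M Mmax; have E2 := uniq nS nS_max.
by move=> x /sXM /E1 /E2.
Qed.


Hypothesis loc : local_ring S.

Definition RHS (X : Q -> Prop) :=
  (exists Y : R -> Prop, [/\ reg_trace Y, subP Y J &
        eqP_ X (fun z => exists y, Y y /\ z = (iota q)^-1 * iota y)])
     \/ eqP_ X (colonP iota I).

Lemma lhs_to_rhs (X : Q -> Prop) (X' : S -> Prop) : reg_trace X' ->
  eqP_ X (fun z => exists a, X' a /\ z = vS a) -> RHS X.
Proof.
move=> trX HX; have HX'I := reg_trace_ideal trX; have [X0 XD XM] := HX'I.
case: (pselect (X' 1)) => [X1|nX1].
  right => z; split.
    by move=> /HX [a [_ ->]]; exact: vSP.
  move=> Pz; apply/HX; have Pz' : z \in colonb iota I by apply/asboolP.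
  exists (toS Pz'); split => //; have := XM (toS Pz') 1 X1; by rewrite mulr1.
left; have sXn := in_nS loc HX'I nX1.
have [[M HM] [x0 [Xx0 nzx0]]] := trX.
exists (pull q X'); split.
- have [j0 [Jj0 Ej0]] := sXn _ Xx0.
  have u0 : iota j0 \is a GRing.unit by rewrite -Ej0 unitrM uq nzd_S_unit.
  have Yj0 : pull q X' j0 by exists x0; split.
  split; last first.
    exists j0; split => // y jy; apply: iinj; apply: (mulrI u0).
    by rewrite -rmorphM jy !rmorph0 mulr0.
  apply: (ideal_trace iinj (pull_ideal q HX'I) Yj0 u0).
  move=> al Hal y [x [Xx Ey]].
  have C1 : forall i, I i -> forall x, X' x ->
      exists x', X' x' /\ (iota q)^-1 * iota i * vS x = vS x'.
    move=> i Ii; apply: (trace_stable vS_inj HM) => x1 Xx1.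
    have [j [Jj Ej]] := sXn _ Xx1; have [j'' [Jj'' E'']] := F_IJ Ii Jj.
    exists (toS (F2 Jj'')); rewrite vS_toS.
    have -> : vS x1 = (iota q)^-1 * iota j by rewrite -Ej mulKr ?uq.
    by rewrite -mulrA [iota i * _]mulrCA -rmorphM E'' rmorphM mulKr ?uq.
  have C2 : forall x, X' x -> al * vS x \in colonb iota I.
    move=> x1 Xx1; apply: F_RI => i Ii.
    have [x' [Xx' Ex']] := C1 i Ii x1 Xx1.
    have [j' [Jj' Ej']] := sXn _ Xx'.
    have [a Ea] := Hal j' (ex_intro _ x' (conj Xx' (esym Ej'))).
    exists a; rewrite -Ea -Ej' -Ex' -!mulrA mulVKr ?uq //.
    by rewrite [iota i * _]mulrC.
  have [x' [Xx' Ex']] : exists x', X' x' /\ al * vS x = vS x'.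
    apply: (trace_stable vS_inj HM) => // x1 Xx1.
    by exists (toS (C2 x1 Xx1)).
  have [j' [Jj' Ej']] := sXn _ Xx'.
  exists j'; split; first by exists x'; split.
  by rewrite Ey mulrCA Ex' Ej'.
- move=> r [x [Xx E]]; have [j [Jj Ej]] := sXn _ Xx.
  by rewrite (iinj (_ : iota r = iota j)) // E Ej.
- move=> z; split.
    move=> /HX [a [Xa ->]]; have [j [Jj Ej]] := sXn _ Xa.
    exists j; split; first by exists a; split.
    by rewrite -Ej mulKr ?uq.
  by move=> [y [[x [Xx Ey]] ->]]; apply/HX; exists x; split => //; rewrite Ey mulKr ?uq.
Qed.

Lemma rhs_to_lhs (X : Q -> Prop) : RHS X ->
  exists X' : S -> Prop, reg_trace X' /\ eqP_ X (fun z => exists a, X' a /\ z = vS a).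
Proof.
case.
- move=> [Y [trY YJ HX]]; have YI := reg_trace_ideal trY; have [Y0 YD YM] := YI.
  have [[MY HMY] [y0 [Yy0 nzy0]]] := trY.
  pose X' : S -> Prop := fun s => exists y, Y y /\ iota q * vS s = iota y.
  exists X'; split; last first.
    move=> z; split.
      move=> /HX [y [Yy ->]]; exists (toS (F2 (YJ _ Yy))); split; last by rewrite vS_toS.
      by exists y; split => //; rewrite vS_toS mulVKr ?uq.
    by move=> [a [[y [Yy Ea]] ->]]; apply/HX; exists y; split => //; rewrite -Ea mulKr ?uq.
  have X'I : is_ideal X'.
    split.
    + by exists 0; split => //; rewrite !rmorph0 mulr0.
    + move=> x y [y1 [Y1 E1]] [y2 [Y2 E2]]; exists (y1 + y2); split; first exact: YD.
      by rewrite !rmorphD mulrDr E1 E2.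
    + move=> a x [y [Yy E]].
      have Hst : forall y, Y y -> exists r, vS a * iota y = iota r.
        by move=> y1 Yy1; have [j [_ Ej]] := vSP a (JI (YJ _ Yy1)); exists j.
      have [y' [Yy' Ey']] := trace_stable iinj HMY Hst Yy.
      by exists y'; split => //; rewrite rmorphM mulrCA E.
  pose x0 := toS (F2 (YJ _ Yy0)).
  have u0 : vS x0 \is a GRing.unit by rewrite vS_toS unitrM unitrV uq iunit.
  have Xx0 : X' x0 by exists y0; split => //; rewrite vS_toS mulVKr ?uq.
  split; last first.
    exists x0; split => // s Hs; apply: vS_inj; rewrite rmorph0; apply: (mulrI u0).
    by rewrite -rmorphM Hs rmorph0 mulr0.
  apply: (ideal_trace vS_inj X'I Xx0 u0).
  move=> al Hal x [y [Yy Ey]].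
  have [a Ea] := Hal x (ex_intro _ y (conj Yy Ey)).
  have Hst : forall y, Y y -> exists r, al * iota y = iota r.
    move=> y1 Yy1; pose xy := toS (F2 (YJ _ Yy1)).
    have Xxy : X' xy by exists y1; split => //; rewrite vS_toS mulVKr ?uq.
    have [b Eb] := Hal xy Xxy; have [r [Ir Er]] := vSP b Iq.
    by exists r; rewrite -Er -Eb vS_toS [X in _ = X]mulrAC -[X in _ = X]mulrA mulVKr ?uq.

  have [y' [Yy' Ey']] := trace_stable iinj HMY Hst Yy.
  exists a; split => //; exists y'; split => //.
  by rewrite -Ea mulrCA Ey Ey'.
- move=> HX; exists (fun _ => True); split.
    split; last by exists 1; split => // y; rewrite mul1r.
    have u1 : vS 1 \is a GRing.unit by rewrite rmorph1 unitr1.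
    have TI : is_ideal (fun _ : S => True) by split.
    apply: (@ideal_trace _ _ vS vS_inj (fun _ => True) TI 1 Logic.I u1).
    by move=> al Hal y _; have [a Ea] := Hal y Logic.I; exists a.
  move=> z; split.
    move=> /HX Pz; have Pz' : z \in colonb iota I by apply/asboolP.
    by exists (toS Pz').
  by move=> [a [_ ->]]; apply/HX; exact: vSP.
Qed.

End Main.

End Helpers.
Import Helpers.

Theorem corollary2p8 (R : comNzRingType) (Q : comUnitRingType)
  (iota : {rmorphism R -> Q}) (m : R -> Prop) (I J : ideal R) (q : R) :
  total_ring_of_fractions iota ->
  local_with m -> noetherian R -> krull_dim R 1 -> cohen_macaulay m ->
  reg_trace I -> reg_trace J -> subP J I -> quot_length J I 2 ->
  local_ring (colon_ring iota I) ->
  I q -> ~ J q ->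
  eqP_ (prod_ideal I J) (fun z => exists j, J j /\ z = q * j) ->
  ~ eqP_ (prod_ideal I I) (fun z => exists i, I i /\ z = q * i) ->
  forall X : Q -> Prop,
    (exists X' : colon_ring iota I -> Prop,
        reg_trace X' /\ eqP_ X (fun z => exists a, X' a /\ z = colon_val a))
    <->
    ((exists Y : R -> Prop, [/\ reg_trace Y, subP Y J &
        eqP_ X (fun z => exists y, Y y /\ z = (iota q)^-1 * iota y)])
     \/ eqP_ X (colonP iota I)).
Proof.
move=> [iinj iunit ifrac] _ noeth _ _ trI trJ JI [_ Hno3] loc Iq nJq HIJ HII X; split.
- move=> [X' [trX HX]].
  exact: (lhs_to_rhs iinj iunit ifrac trI trJ JI Iq nJq HIJ HII Hno3 noeth loc trX HX).
- move=> H.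
  exact: (rhs_to_lhs iinj iunit trI trJ JI Iq HIJ H).
Qed.

Print Assumptions corollary2p8.
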